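(* Let $Q$ be a QNP and let $\pi$ be a policy for $Q$. A sequence $\bar\tau=\bar s_0,\bar s_1,\dots$ is an infinite non-terminating $\pi$-trajectory of the FOND problem $P=T_D(Q)$ if and only if there is an infinite $\pi$-trajectory $\tau=s_0,s_1,\dots$ of $Q$ (an $\epsilon$-trajectory for some $\epsilon>0$) such that $\bar s_i$ is the boolean state of $s_i$ for every $i$.
   Context: A qualitative numerical problem (QNP) is a tuple $Q=\langle F,V,I,O,G\rangle$ where $F$ is a finite set of propositional variables and $V$ a finite set of numerical variables taking non-negative real values. $F$-literals are $p,\neg p$; $V$-literals are $X=0$ and $X>0$. $I$ and $G$ are consistent sets of literals. Each action $a\in O$ has a precondition $Pre(a)$ (set of $F$- and $V$-literals), propositional effects $\mathit{Eff}(a)$ (set of $F$-literals) and numerical effects $N(a)$ (atoms $Inc(X)$, $Dec(X)$, at most one per variable); if $Dec(X)\in N(a)$ then $X>0\in Pre(a)$. A state $s$ assigns truth values to $F$ and reals $s[X]\ge 0$ to $V$. Initial states satisfy $I$ under a closed-world assumption. $a$ is applicable in $s$ if $s$ satisfies $Pre(a)$. For applicable $a$, $s'\in F(a,s)$ iff the propositional effects are applied (others unchanged), $s'[X]>s[X]$ if $Inc(X)\in N(a)$, $s'[X]<s[X]$ if $Dec(X)\in N(a)$, $s'[X]=s[X]$ otherwise. A trajectory is a sequence $s_0,a_0,s_1,\dots$ with $s_0$ initial, $a_i$ applicable in $s_i$, $s_{i+1}\in F(a_i,s_i)$; for $\epsilon>0$ it is an $\epsilon$-trajectory if for all $X,i$: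 $s_{i+1}[X]\neq s_i[X]$ implies $|s_{i+1}[X]-s_i[X]|\ge\epsilon$ or $0=s_{i+1}[X]<s_i[X]<\epsilon$. The boolean state $\bar s$ of $s$ is its truth valuation on the atoms $p\in F$ and $X=0$. A policy is a partial map $\pi$ from states to actions with $\pi(s)=\pi(s')$ whenever $\bar s=\bar s'$; a $\pi$-trajectory has $a_i=\pi(s_i)$. The direct translation $T_D(Q)$ is the FOND problem over $F\cup\{p_{X=0}:X\in V\}$ obtained by reading $X=0$ as $p_{X=0}$ and $X>0$ as $\neg p_{X=0}$ in $I$, $G$, preconditions, keeping propositional effects, replacing $Inc(X)$ by the deterministic effect $\neg p_{X=0}$ and $Dec(X)$ by the nondeterministic effect $\neg p_{X=0}\mid p_{X=0}$. Its states are the boolean states of $Q$, its unique initial state is the common boolean state of the initial states of $Q$, and $\pi$ acts on it via $\bar s\mapsto \pi(s)$. A $\pi$-trajectory of $T_D(Q)$ is a sequence $\bar s_0,\bar s_1,\dots$ from the initial state with $\pi(\bar s_i)$ applicable and $\bar s_{i+1}$ a possible successor. An action of $T_D(Q)$ is a $Dec(X)$ (resp. $Inc(X)$) action if the corresponding action of $Q$ has $Dec(X)$ (resp. $Inc(X)$) in $N(a)$. For an infinite $\pi$-trajectory of $T_D(Q)$, the recurrent states are those occurring infinitely often; the trajectory is terminating if there is $X\in V$ such that $\pi(\bar s)$ is a $Dec(X)$ action for some recurrent $\bar s$ and $\pi(\bar s')$ is not an $Inc(X)$ action for any recurrent $\bar s'$; otherwise it is non-terminating. *)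

(* Defs.v *)
From mathcomp Require Import all_boot.
From Stdlib Require Import Reals List.

Set Implicit Arguments.
Unset Strict Implicit.
Unset Printing Implicit Defensive.

Section QNP.
Variables (F V O : finType).

(* Literals: FL p b is p (b = true) or ~p (b = false);
   VL X z is "X = 0" (z = true) or "X > 0" (z = false). *)
Inductive lit := FL (p : F) (b : bool) | VL (X : V) (z : bool).

(* A QNP <F,V,I,O,G>.  Numerical effects N(a) are given as a function
   V -> option bool: Some true = Inc(X), Some false = Dec(X), None = no effect
   (this encodes "at most one atom per variable"). *)
Record qnp := QNP {
  init : list lit;
  goal : list lit;
  pre  : O -> list lit;
  eff  : O -> list (F * bool);
  num  : O -> V -> option bool
}.

Definition consistent (l : list lit) : Prop :=
  (forall p b, In (FL p b) l -> ~ In (FL p (~~ b)) l) /\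
  (forall X z, In (VL X z) l -> ~ In (VL X (~~ z)) l).

Definition wf_qnp (Q : qnp) : Prop :=
  consistent (init Q) /\ consistent (goal Q) /\
  (forall a X, num Q a X = Some false -> In (VL X false) (pre Q a)).

Definition qstate : Type := ((F -> bool) * (V -> R))%type.

Definition valid (s : qstate) : Prop := forall X, (0 <= s.2 X)%R.

Definition holds (s : qstate) (l : lit) : Prop :=
  match l with
  | FL p b => s.1 p = b
  | VL X z => if z then s.2 X = 0%R else (0 < s.2 X)%R
  end.

(* initial states: satisfy I under the closed-world assumption *)
Definition initial (Q : qnp) (s : qstate) : Prop :=
  valid s /\
  (forall p, s.1 p = true <-> In (FL p true) (init Q)) /\
  (forall X, s.2 X = 0%R <-> In (VL X true) (init Q)).

Definition applicable (Q : qnp) (a : O) (s : qstate) : Prop :=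
  forall l, In l (pre Q a) -> holds s l.

Definition prop_step (Q : qnp) (a : O) (v v' : F -> bool) : Prop :=
  forall p,
    (In (p, true) (eff Q a) -> v' p = true) /\
    (In (p, false) (eff Q a) -> v' p = false) /\
    (~ In (p, true) (eff Q a) -> ~ In (p, false) (eff Q a) -> v' p = v p).

Definition succQ (Q : qnp) (a : O) (s s' : qstate) : Prop :=
  valid s' /\ prop_step Q a s.1 s'.1 /\
  forall X,
    match num Q a X with
    | Some true => (s.2 X < s'.2 X)%R
    | Some false => (s'.2 X < s.2 X)%R
    | None => s'.2 X = s.2 X
    end.

(* boolean states: valuation of the atoms p in F and "X = 0" for X in V *)
Definition bstate : Type := ((F -> bool) * (V -> bool))%type.

Definition bar (s : qstate) : bstate :=
  (s.1, fun X => if Req_EM_T (s.2 X) 0%R then true else false).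

Definition is_policy (pol : qstate -> option O) : Prop :=
  forall s s', valid s -> valid s' -> bar s = bar s' -> pol s = pol s'.

Definition trajQ (Q : qnp) (pol : qstate -> option O) (s : nat -> qstate) : Prop :=
  initial Q (s 0) /\
  forall i, exists a, pol (s i) = Some a /\ applicable Q a (s i) /\
                      succQ Q a (s i) (s i.+1).

Definition eps_traj (eps : R) (s : nat -> qstate) : Prop :=
  forall X i, (s i.+1).2 X <> (s i).2 X ->
    (Rabs ((s i.+1).2 X - (s i).2 X) >= eps)%R \/
    (0 = (s i.+1).2 X /\ (s i.+1).2 X < (s i).2 X /\ (s i).2 X < eps)%R.

Definition bholds (bs : bstate) (l : lit) : Prop :=
  match l with
  | FL p b => bs.1 p = b
  | VL X z => bs.2 X = z
  end.

Definition initialD (Q : qnp) (bs : bstate) : Prop :=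
  (forall p, bs.1 p = true <-> In (FL p true) (init Q)) /\
  (forall X, bs.2 X = true <-> In (VL X true) (init Q)).

Definition applicableD (Q : qnp) (a : O) (bs : bstate) : Prop :=
  forall l, In l (pre Q a) -> bholds bs l.

(* Inc(X) becomes the deterministic effect ~p_{X=0};
   Dec(X) becomes the nondeterministic effect ~p_{X=0} | p_{X=0}. *)
Definition succD (Q : qnp) (a : O) (bs bs' : bstate) : Prop :=
  prop_step Q a bs.1 bs'.1 /\
  forall X,
    match num Q a X with
    | Some true => bs'.2 X = false
    | Some false => True
    | None => bs'.2 X = bs.2 X
    end.

Definition lift (bs : bstate) : qstate :=
  (bs.1, fun X => if bs.2 X then 0%R else 1%R).

(* pi acts on T_D(Q) via  bar s |-> pi(s) *)
Definition polD (pol : qstate -> option O) (bs : bstate) : option O :=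
  pol (lift bs).

Definition trajD (Q : qnp) (pol : qstate -> option O) (bs : nat -> bstate) : Prop :=
  initialD Q (bs 0) /\
  forall i, exists a, polD pol (bs i) = Some a /\ applicableD Q a (bs i) /\
                      succD Q a (bs i) (bs i.+1).

Definition recurrent (bs : nat -> bstate) (b : bstate) : Prop :=
  forall n, exists m, (n <= m)%N /\ bs m = b.

Definition terminating (Q : qnp) (pol : qstate -> option O) (bs : nat -> bstate) : Prop :=
  exists X,
    (exists b a, recurrent bs b /\ polD pol b = Some a /\ num Q a X = Some false) /\
    (forall b a, recurrent bs b -> polD pol b = Some a -> num Q a X <> Some true).

Definition non_terminating Q pol bs : Prop := ~ terminating Q pol bs.

End QNP.

(* Main.v *)
Require Import Defs.
From mathcomp Require Import all_boot.
From Stdlib Require Import Reals List.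
From Stdlib Require Import Classical ClassicalEpsilon FunctionalExtensionality Lia Lra.
From mathcomp Require Import zify.
Set Implicit Arguments.

Lemma finite_bound (T : eqType) (P : T -> nat -> Prop)
  (mono : forall c M M', P c M -> (M <= M')%N -> P c M') (l : list T)
  (H : forall c, exists M, P c M) : exists M, forall c, c \in l -> P c M.
Proof.
elim: l => [|c l [M IH]]; first by exists 0.
have [Mc HMc] := H c.
exists (maxn M Mc) => d; rewrite inE => /orP [/eqP -> | Hd].
- by apply: mono HMc _; rewrite leq_maxr.
- by apply: mono (IH _ Hd) _; rewrite leq_maxl.
Qed.

Lemma pigeon (T : finType) (f : nat -> T) :
  exists M, forall j, (M <= j)%N -> forall n, exists m, (n <= m)%N /\ f m = f j.
Proof.
pose P c M := (forall j, (M <= j)%N -> f j <> c) \/ (forall n, exists m, (n <= m)%N /\ f m = c).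
have mono : forall c M M', P c M -> (M <= M')%N -> P c M'.
  move=> c M M' [H|H] HM; [left=> j Hj; apply: H; exact: leq_trans HM Hj | by right].
have H : forall c, exists M, P c M.
  move=> c; case: (classic (forall n, exists m, (n <= m)%N /\ f m = c)) => Hc.
  - by exists 0; right.
  - apply: NNPP => Hn; apply: Hc => n; apply: NNPP => Hm; apply: Hn; exists n; left => j Hj Hfj; apply: Hm; by exists j.
have [M HM] := @finite_bound T P mono (enum T) H.
exists M => j Hj; case: (HM (f j) (mem_enum _ _)) => [H1|H2]; last exact: H2.
by case: (H1 j Hj).
Qed.

Lemma pigeonB (F V : finType) (bs : nat -> bstate F V) :
  exists M, forall j, (M <= j)%N -> recurrent bs (bs j).
Proof.
have [M HM] := @pigeon _ (fun j => ([ffun p => (bs j).1 p], [ffun X => (bs j).2 X])).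
exists M => j Hj n; have [m [Hnm Hm]] := HM j Hj n; exists m; split=> //.
case: Hm => H1 H2.
move: H1 H2; case: (bs m) => [a b]; case: (bs j) => [c d] /= H1 H2.
f_equal; apply: functional_extensionality => x.
- by have := congr1 (fun g : {ffun F -> bool} => g x) H1; rewrite !ffunE.
- by have := congr1 (fun g : {ffun V -> bool} => g x) H2; rewrite !ffunE.
Qed.

Lemma bar_lift (F V : finType) (b : bstate F V) : bar (Defs.lift b) = b.
Proof.
case: b => [b1 b2]; rewrite /bar /Defs.lift /=; f_equal.
apply: functional_extensionality => X; case: (b2 X);
 case: Req_EM_T => //= H; exfalso; lra.
Qed.

Lemma valid_lift (F V : finType) (b : bstate F V) : valid (Defs.lift b).
Proof. move=> X /=; case: (b.2 X); lra. Qed.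

Lemma polD_bar (F V O : finType) (pol : qstate F V -> option O) s :
  is_policy pol -> valid s -> polD pol (bar s) = pol s.
Proof.
move=> Hp Hs; rewrite /polD; apply: Hp => //; first exact: valid_lift.
by rewrite bar_lift.
Qed.

Lemma INR_eps (m n : nat) : INR m <> INR n -> (Rabs (INR m - INR n) >= 1)%R.
Proof.
move=> H; have Hmn : m <> n by move=> E; apply: H; rewrite E.
case: (Nat.lt_total m n) => [Hl|[Hl|Hl]].
- rewrite Rabs_minus_sym -minus_INR; last lia.
  rewrite Rabs_right; last by apply: Rle_ge; apply: pos_INR.
  have : (INR 1 <= INR (Nat.sub n m))%R by apply: le_INR; lia.
  rewrite /=; lra.
- by [].
- rewrite -minus_INR; last lia.
  rewrite Rabs_right; last by apply: Rle_ge; apply: pos_INR.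
  have : (INR 1 <= INR (Nat.sub m n))%R by apply: le_INR; lia.
  rewrite /=; lra.
Qed.

Lemma trajQ_valid (F V O : finType) (Q : qnp F V O) pol s :
  trajQ Q pol s -> forall i, valid (s i).
Proof.
case=> [[Hv _] Hs] [|i] //; by have [a [_ [_ [Hv' _]]]] := Hs i.
Qed.

Lemma holds_bholds (F V : finType) (s : qstate F V) l :
  holds s l -> bholds (bar s) l.
Proof.
case: l => [p b|X [|]] //=; case: Req_EM_T => //= H1 H2; exfalso; lra.
Qed.

Lemma dir_back (F V O : finType) (Q : qnp F V O) pol (HQ : wf_qnp Q)
  (Hpol : is_policy pol) eps s :
  (0 < eps)%R -> trajQ Q pol s -> eps_traj eps s ->
  trajD Q pol (fun i => bar (s i)) /\ non_terminating Q pol (fun i => bar (s i)).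
Proof.
move=> Heps Htr Heps_tr.
have Hval := trajQ_valid Htr.
case: Htr => [Hinit Hst].
split.
  split.
  - case: Hinit => [_ [H1 H2]]; split => [p|X] /=; first exact: H1.
    rewrite -H2; case: Req_EM_T => //= _; split=> //.
  - move=> i; have [a [Ha [Happ [_ [Hps Hnum]]]]] := Hst i.
    exists a; split; first by rewrite polD_bar.
    split; first by move=> l Hl; apply: holds_bholds; apply: Happ.
    split=> //= X; have := Hnum X; have := Hval i X.
    case: (Defs.num Q a X) => [[|]|] //=.
    + move=> H0 Hlt; case: Req_EM_T => //= E; exfalso; lra.
    + by move=> _ ->.
move=> [X [[b [a [Hrec [Hpa Hdec]]]] Hnoinc]].
have [M HM] := pigeonB (fun i => bar (s i)).
pose x j := (s j).2 X.
have Hstep : forall j, (M <= j)%N -> (x j.+1 <= x j)%R.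
  move=> j Hj; have [a' [Ha' [_ [_ [_ Hnum]]]]] := Hst j.
  have Hni := Hnoinc _ _ (HM j Hj) (etrans (polD_bar Hpol (Hval j)) Ha').
  rewrite /x; have := Hnum X; move: Hni; case: (Defs.num Q a' X) => [[|]|] //= _; lra.
have Hmono : forall j d, (M <= j)%N -> (x (addn j d) <= x j)%R.
  move=> j d Hj; elim: d => [|d IH]; first by rewrite addn0; lra.
  rewrite addnS; apply: Rle_trans (Hstep _ _) IH; lia.
have Hdecs : forall n, exists m, (n <= m)%N /\ pol (s m) = Some a.
  move=> n; have [m [Hnm Hm]] := Hrec n; exists m; split=> //.
  by rewrite -(polD_bar Hpol (Hval m)) Hm.
have Hpos : forall m, pol (s m) = Some a -> (0 < x m)%R /\ (x m.+1 < x m)%R.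
  move=> m Hm; have [a' [Ha' [Happ [_ [_ Hnum]]]]] := Hst m.
  move: Ha'; rewrite Hm => -[Eaa]; subst a'.
  case: HQ => [_ [_ HQ3]]; split; first by have := Happ _ (HQ3 _ _ Hdec).
  by have := Hnum X; rewrite Hdec.
have Hdrop : forall m, (M <= m)%N -> pol (s m) = Some a -> (x m.+1 <= x m - eps)%R.
  move=> m Hm Ha; have [H0 Hlt] := Hpos m Ha.
  case: (Heps_tr X m) => [|Habs|[Hz _]].
  - rewrite -/(x m) -/(x m.+1); lra.
  - rewrite -/(x m) -/(x m.+1) in Habs; rewrite Rabs_left1 in Habs; lra.
  - exfalso; have [m' [Hm' Hm'a]] := Hdecs m.+1.
    have [H0' _] := Hpos m' Hm'a.
    have := Hmono m.+1 (m' - m.+1) (leq_trans Hm (leqnSn m)).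
    rewrite subnKC //; rewrite /x -Hz; rewrite /x in H0'; lra.
have Hk : forall k : nat, exists j, (M <= j)%N /\ (x j <= x M - INR k * eps)%R.
  elim=> [|k [j [Hj Hxj]]]; first by exists M; split=> //; rewrite /=; lra.
  have [m [Hjm Hma]] := Hdecs j.
  have Hmj := Hmono j (m - j) Hj; rewrite subnKC // in Hmj.
  have := Hdrop m (leq_trans Hj Hjm) Hma.
  exists m.+1; split; first lia.
  rewrite S_INR; lra.
have [k Hk'] := INR_unbounded (x M / eps).
have [j [_ Hj]] := Hk k.
have Hxv := Hval j X; rewrite -/(x j) in Hxv.
have : (x M < INR k * eps)%R.
  apply: (Rmult_lt_reg_r (/ eps)); first by apply: Rinv_0_lt_compat.
  rewrite Rmult_assoc Rinv_r; last lra.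
  rewrite Rmult_1_r; exact: Hk'.
lra.
Qed.

Fixpoint nsum (f : nat -> bool) (n : nat) : nat :=
  if n is k.+1 then addn (nsum f k) (f k) else 0.

Lemma cnt_exists (Inc Dec : nat -> bool) (excl : forall i, Inc i -> ~~ Dec i)
  (Hcase : (exists M, forall j, (M <= j)%N -> ~~ Dec j) \/
           (forall n, exists j, (n <= j)%N /\ Inc j)) :
  exists cnt : nat -> nat,
    (forall i, ~~ Inc i -> cnt i = addn (Dec i) (cnt i.+1)) /\
    (forall i, Inc i -> (cnt i <= cnt i.+1)%N).
Proof.
case: Hcase => [[M HM]|Hinf].
- pose cnt i := count Dec (iota i (M - i)).
  have Hc : forall i, cnt i = addn (Dec i) (cnt i.+1).
    move=> i; rewrite /cnt; case: (ltnP i M) => Hi.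
    + have -> : M - i = (M - i.+1).+1 by lia.
      by [].
    + have -> : M - i = 0 by lia.
      have -> : M - i.+1 = 0 by lia.
      by have := HM i Hi; case: (Dec i).
  exists cnt; split=> [i _|i Hi]; first exact: Hc.
  by rewrite Hc; move: (excl i Hi); case: (Dec i).
- have exP : forall i, exists j, (i <= j) && Inc j.
    by move=> i; have [j [H1 H2]] := Hinf i; exists j; rewrite H1 H2.
  pose nxt i := ex_minn (exP i).
  have Hn : forall i, (i <= nxt i)%N /\ Inc (nxt i) /\ forall j, (i <= j)%N -> Inc j -> (nxt i <= j)%N.
    move=> i; rewrite /nxt; case: ex_minnP => m /andP [H1 H2] H3; split=> //; split=> //.
    by move=> j Hj Hj'; apply: H3; rewrite Hj Hj'.
  pose cnt i := count Dec (iota i (nxt i - i)).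
  exists cnt; split=> [i Hi|i Hi].
  + have [H1 [H2 H3]] := Hn i; have [H1' [H2' H3']] := Hn i.+1.
    have Hne : nxt i != i by apply/eqP => E; move: H2; rewrite E (negbTE Hi).
    have Hlt : (i < nxt i)%N by rewrite ltn_neqAle eq_sym Hne H1.
    have E : nxt i.+1 = nxt i.
      apply/eqP; rewrite eqn_leq H3' // H3 //; exact: ltnW.
    rewrite /cnt E; have -> : nxt i - i = (nxt i - i.+1).+1 by lia.
    by [].
  + have [H1 [H2 H3]] := Hn i.
    have : (nxt i <= i)%N by apply: H3.
    rewrite /cnt => Hle; have -> : nxt i - i = 0 by lia.
    by [].
Qed.

Lemma Req_nat (n : nat) : (if Req_EM_T (INR n) 0 then true else false) = (n == 0).
Proof.
case: Req_EM_T => H; case: n H => [|n] H //; exfalso.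
- by move: H; apply: not_0_INR.
Qed.

Lemma dir_fwd (F V O : finType) (Q : qnp F V O) pol (HQ : wf_qnp Q)
  (Hpol : is_policy pol) bs :
  trajD Q pol bs -> non_terminating Q pol bs ->
  exists s, trajQ Q pol s /\ eps_traj 1 s /\ forall i, bar (s i) = bs i.
Proof.
move=> [Hinit Hstep] Hnt.
have [a0 _] := Hstep 0.
pose act i := if polD pol (bs i) is Some a then a else a0.
have HA : forall i, polD pol (bs i) = Some (act i) /\ applicableD Q (act i) (bs i)
                    /\ succD Q (act i) (bs i) (bs i.+1).
  by move=> i; have [a [H1 H2]] := Hstep i; rewrite /act H1.
pose Inc X i := Defs.num Q (act i) X == Some true.
pose Dec X i := Defs.num Q (act i) X == Some false.
have [M0 HM0] := pigeonB bs.
have Hcase : forall X, (exists M, forall j, (M <= j)%N -> ~~ Dec X j) \/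
           (forall n, exists j, (n <= j)%N /\ Inc X j).
  move=> X; case: (classic (exists M, forall j, (M <= j)%N -> ~~ Dec X j)) => H; first by left.
  right.
  have Hd : forall M, exists j, (M <= j)%N /\ Dec X j.
    move=> M; apply: NNPP => Hn; apply: H; exists M => j Hj; apply/negP => Hdj.
    by apply: Hn; exists j.
  have [j [Hj Hdj]] := Hd M0.
  have Hnot : ~ (forall b a, recurrent bs b -> polD pol b = Some a -> Defs.num Q a X <> Some true).
    move=> Hall; apply: Hnt; exists X; split=> //.
    exists (bs j), (act j); split; first exact: HM0.
    split; first by case: (HA j).
    exact/eqP.
  have [b [a Hb]] : exists b a, recurrent bs b /\ polD pol b = Some a /\ Defs.num Q a X = Some true.
    apply: NNPP => Hn; apply: Hnot => b a Hr Hp Hi; apply: Hn; by exists b, a.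
  case: Hb => [Hr [Hp Hi]] n; have [m [Hnm Hm]] := Hr n; exists m; split=> //.
  have [Hpm _] := HA m; rewrite Hm Hp in Hpm; case: Hpm => Eam; rewrite /Inc -Eam.
  exact/eqP.
have Hcnt : forall X, exists cnt : nat -> nat,
    (forall i, ~~ Inc X i -> cnt i = addn (Dec X i) (cnt i.+1)) /\
    (forall i, Inc X i -> (cnt i <= cnt i.+1)%N).
  move=> X; apply: cnt_exists (Hcase X).
  by move=> i; rewrite /Inc /Dec => /eqP ->.
have [cntf Hcntf] := choice _ Hcnt.
pose w X i := if (bs i).2 X then 0 else (addn (nsum (Inc X) i) (cntf X i)).+1.
pose s i : qstate F V := ((bs i).1, fun X => INR (w X i)).
have Hval : forall i, valid (s i) by move=> i X; apply: pos_INR.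
have Hbar : forall i, bar (s i) = bs i.
  move=> i; rewrite /bar /s /=; case E: (bs i) => [b1 b2] /=; f_equal.
  apply: functional_extensionality => X; rewrite Req_nat /w E /=.
  by case: (b2 X).
have Hpols : forall i, pol (s i) = Some (act i).
  by move=> i; rewrite -(polD_bar Hpol (Hval i)) Hbar; case: (HA i).
have Hw0 : forall i X, INR (w X i) = 0%R <-> (bs i).2 X = true.
  move=> i X; rewrite /w; case: ((bs i).2 X) => //; split=> // H; exfalso.
  by move: H; apply: not_0_INR.
have Hnat : forall i X,
  match Defs.num Q (act i) X with
  | Some true => (w X i < w X i.+1)%N
  | Some false => (w X i.+1 < w X i)%N
  | None => w X i.+1 = w X i
  end.
  move=> i X; have [_ [Happ [_ Hsn]]] := HA i.
  have [R1 R2] := Hcntf X.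
  have := Hsn X; rewrite /w.
  case E: (Defs.num Q (act i) X) => [[|]|].
  - have HI : Inc X i by rewrite /Inc E.
    have := R2 i HI; move=> Hle ->.
    rewrite /= HI; case: ((bs i).2 X) => //; lia.
  - have HD : (bs i).2 X = false.
      case: HQ => [_ [_ HQ3]]; exact: (Happ _ (HQ3 _ _ E)).
    have HI : Inc X i = false by rewrite /Inc E.
    have HDe : Dec X i = true by rewrite /Dec E.
    have := R1 i (negbT HI); rewrite HDe => Hc _.
    rewrite HD /= HI; case: ((bs i.+1).2 X) => //; lia.
  - have HI : Inc X i = false by rewrite /Inc E.
    have HDe : Dec X i = false by rewrite /Dec E.
    have := R1 i (negbT HI); rewrite HDe => Hc ->.
    rewrite /= HI; case: ((bs i).2 X) => //; lia.
exists s; split; [split|split].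
- split; first exact: Hval.
  case: Hinit => [H1 H2]; split => [p|X]; first exact: H1.
  by rewrite Hw0 H2.
- move=> i; exists (act i); split; first exact: Hpols.
  have [_ [Happ [Hps _]]] := HA i.
  split.
    move=> l Hl; have := Happ l Hl; case: l {Hl} => [p b|X [|]] //= H.
    + by apply/Hw0.
    + apply: lt_0_INR; rewrite /w H; lia.
  split; first exact: Hval.
  split; first exact: Hps.
  move=> X; have := Hnat i X; rewrite /s /=.
  case: (Defs.num Q (act i) X) => [[|]|] H.
  + by apply: lt_INR; apply/ltP.
  + by apply: lt_INR; apply/ltP.
  + by rewrite H.
- by move=> X i H; left; apply: INR_eps.
- exact: Hbar.
Qed.

Theorem theorem3 (F V O : finType) (Q : qnp F V O) (pol : qstate F V -> option O)
  (HQ : wf_qnp Q) (Hpol : is_policy pol) (bs : nat -> bstate F V) :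
  (trajD Q pol bs /\ non_terminating Q pol bs) <->
  (exists eps : R, (0 < eps)%R /\
     exists s : nat -> qstate F V,
       trajQ Q pol s /\ eps_traj eps s /\ forall i, bar (s i) = bs i).
Proof.
split.
- move=> [Ht Hn]; have [s [H1 [H2 H3]]] := dir_fwd HQ Hpol Ht Hn.
  exists 1%R; split; first lra.
  by exists s.
- move=> [eps [Heps [s [H1 [H2 H3]]]]].
  have -> : bs = (fun i => bar (s i)) by apply: functional_extensionality => i; rewrite H3.
  have := dir_back HQ Hpol Heps H1 H2. exact.
Qed.
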